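(* For integers $r,k\ge0$ and real $\alpha$ with $\alpha>k>r$, $$\sum_{n=1}^\infty\frac{H_{n+\alpha}^{(2)}}{(n+r)(n+k)}=\frac1{k-r}\Bigg\{(r-\alpha)\sum_{j=1}^r\frac{H_{\alpha+j-r}^{(2)}}{j(\alpha+j-r)}-(k-\alpha)\sum_{j=1}^k\frac{H_{\alpha+j-k}^{(2)}}{j(\alpha+j-k)}-\sum_{j=1}^{k-r}\frac{H_{\alpha+j-k}}{(\alpha+j-k)^2}$$ $$+2H_{\alpha-r}^{(3)}+H_{\alpha-k}\zeta(2)+2H_{\alpha-r}H_{\alpha-r}^{(2)}-2H_{\alpha-k}^{(3)}-H_{\alpha-r}\zeta(2)-2H_{\alpha-k}H_{\alpha-k}^{(2)}\Bigg\}.$$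
   Context: Shifted harmonic numbers: for a real $\alpha$ that is not a negative integer, $H_\alpha := \sum_{k=1}^\infty\left(\frac1k-\frac1{k+\alpha}\right)$ and, for integers $m\ge 2$, $H_\alpha^{(m)} := \sum_{k=1}^\infty\left(\frac1{k^m}-\frac1{(k+\alpha)^m}\right)=\zeta(m)-\zeta(m,\alpha+1)$, where $\zeta$ is the Riemann zeta function and $\zeta(s,\alpha+1)=\sum_{n=1}^\infty (n+\alpha)^{-s}$ is the Hurwitz zeta function. Empty sums are $0$. *)

(* Defs.v *)
From Stdlib Require Import Reals ClassicalEpsilon.
Open Scope R_scope.

(* The sum of a convergent series  sum_{k>=0} f k  (Stdlib's [infinite_sum]);
   chosen by classical epsilon, meaningful whenever the series converges. *)
Definition series (f : nat -> R) : R :=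
  epsilon (inhabits 0) (fun l => infinite_sum f l).

Definition H (a : R) : R :=
  series (fun k => / INR (S k) - / (INR (S k) + a)).

Definition Hm (m : nat) (a : R) : R :=
  series (fun k => / (INR (S k)) ^ m - / (INR (S k) + a) ^ m).

Definition zeta (m : nat) : R := series (fun k => / (INR (S k)) ^ m).

Fixpoint sum1 (n : nat) (f : nat -> R) : R :=
  match n with
  | O => 0
  | S m => sum1 m f + f (S m)
  end.

(* Main.v *)
Require Import Defs.
From Stdlib Require Import Reals Lra Lia ClassicalEpsilon.
Open Scope R_scope.

Lemma Un_cv_ext (u v : nat -> R) l : (forall n, u n = v n) -> Un_cv u l -> Un_cv v l.
Proof. intros E H0 e He. destruct (H0 e He) as [N HN]. exists N; intros n Hn; rewrite <- E; auto. Qed.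

Lemma is_ext f g l : (forall n, f n = g n) -> infinite_sum f l -> infinite_sum g l.
Proof. intros E Hs. apply (Un_cv_ext (sum_f_R0 f)); [intros n; apply sum_eq; auto | exact Hs]. Qed.

Lemma is_plus f g a b : infinite_sum f a -> infinite_sum g b ->
  infinite_sum (fun n => f n + g n) (a + b).
Proof. intros Ha Hb. apply (Un_cv_ext (fun N => sum_f_R0 f N + sum_f_R0 g N)).
 intros n; rewrite plus_sum; auto. apply CV_plus; auto. Qed.

Lemma is_minus f g a b : infinite_sum f a -> infinite_sum g b ->
  infinite_sum (fun n => f n - g n) (a - b).
Proof. intros Ha Hb. apply (Un_cv_ext (fun N => sum_f_R0 f N - sum_f_R0 g N)).
 intros n; rewrite minus_sum; auto. apply CV_minus; auto. Qed.

Lemma cv_const c : Un_cv (fun _ => c) c.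
Proof. intros e He; exists 0%nat; intros n _; unfold R_dist; rewrite Rminus_diag, Rabs_R0; lra. Qed.

Lemma is_scal f a c : infinite_sum f a -> infinite_sum (fun n => c * f n) (c * a).
Proof. intros Ha. apply (Un_cv_ext (fun N => c * sum_f_R0 f N)).
 intros n; rewrite scal_sum; apply sum_eq; intros; ring.
 apply (Un_cv_ext (fun N => (fun _ => c) N * sum_f_R0 f N)); [auto|].
 apply CV_mult; [apply cv_const| auto]. Qed.

Lemma sum_shift f n : sum_f_R0 (fun n => f (S n)) n = sum_f_R0 f (S n) - f 0%nat.
Proof. induction n. simpl; ring. simpl sum_f_R0 at 1. rewrite IHn. simpl. ring. Qed.

Lemma is_shift f l : infinite_sum f l -> infinite_sum (fun n => f (S n)) (l - f 0%nat).
Proof. intros Hl e He. destruct (Hl e He) as [N HN]. exists N; intros n Hn.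
 rewrite sum_shift. unfold R_dist. replace (sum_f_R0 f (S n) - f 0%nat - (l - f 0%nat)) with (sum_f_R0 f (S n) - l) by ring.
 apply HN; lia. Qed.

Lemma is_telesc (g : nat -> R) : Un_cv g 0 -> infinite_sum (fun n => g n - g (S n)) (g 0%nat).
Proof. intros Hg e He. destruct (Hg e He) as [N HN]. exists N; intros n Hn.
 assert (E: sum_f_R0 (fun n => g n - g (S n)) n = g 0%nat - g (S n)).
 { clear Hn. induction n. simpl; ring. simpl sum_f_R0. rewrite IHn. ring. }
 rewrite E. unfold R_dist. replace (g 0%nat - g (S n) - g 0%nat) with (- (g (S n) - 0)) by ring.
 rewrite Rabs_Ropp. apply HN; lia. Qed.

Lemma is_zero : infinite_sum (fun _ => 0) 0.
Proof. intros e He. exists 0%nat; intros n _.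
 assert (E: sum_f_R0 (fun _ => 0) n = 0). { induction n. simpl; ring. simpl. rewrite IHn; ring. }
 rewrite E; unfold R_dist; rewrite Rminus_diag, Rabs_R0; lra. Qed.

Lemma series_spec f : (exists l, infinite_sum f l) -> infinite_sum f (series f).
Proof. intros Hx. unfold series. apply epsilon_spec. exact Hx. Qed.

Lemma series_eq f l : infinite_sum f l -> series f = l.
Proof. intros Hl. apply (uniqueness_sum f); auto. apply series_spec; eauto. Qed.

Lemma inv_lt_eps y e : 0 < y -> 0 < e -> 1 < e * y -> / y < e.
Proof. intros Hy He H1. apply (Rmult_lt_reg_l y); auto. rewrite Rinv_r by lra. nra. Qed.

Lemma cv_inv c : 0 < c -> Un_cv (fun n => / (INR n + c)) 0.
Proof. intros Hc e He. destruct (INR_archimed e 1 He) as [N HN]. exists N; intros n Hn.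
 unfold R_dist. rewrite Rminus_0_r. assert (Hp: 0 < INR n + c) by (pose proof (pos_INR n); lra).
 rewrite Rabs_right by (left; apply Rinv_0_lt_compat; auto).
 apply inv_lt_eps; auto. apply le_INR in Hn. nra. Qed.

Lemma cv_inv_pow c p : 0 < c -> Un_cv (fun n => / (INR n + c) ^ (S p)) 0.
Proof. intros Hc. induction p.
 - apply (Un_cv_ext (fun n => / (INR n + c))); [intros n; rewrite pow_1; auto | apply cv_inv; auto].
 - apply (Un_cv_ext (fun n => / (INR n + c) * / (INR n + c) ^ (S p))).
   intros n. assert (0 < INR n + c) by (pose proof (pos_INR n); lra).
   simpl pow at 2. rewrite Rinv_mult. auto.
   replace 0 with (0 * 0) by ring. apply CV_mult; auto. apply cv_inv; auto. Qed.

Lemma cv_bound (u v : nat -> R) M : 0 <= M -> (forall n, Rabs (u n) <= M * Rabs (v n)) -> Un_cv v 0 -> Un_cv u 0.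
Proof. intros HM Hb Hv e He. destruct (Hv (e / (M + 1))) as [N HN].
 apply Rdiv_lt_0_compat; lra. exists N; intros n Hn. specialize (HN n Hn). unfold R_dist in *.
 rewrite Rminus_0_r in *. specialize (Hb n).
 assert (M * Rabs (v n) <= M * (e / (M+1))) by (apply Rmult_le_compat_l; lra).
 assert (M * (e / (M + 1)) < e). { unfold Rdiv. apply (Rmult_lt_reg_l (M+1)). lra.
   replace ((M + 1) * (M * (e * / (M + 1)))) with (M * e * ((M+1) * / (M+1))) by ring.
   rewrite Rinv_r by lra. nra. }
 lra. Qed.
Lemma tele2 : infinite_sum (fun k => 2 * (/ INR (S k) - / INR (S (S k)))) 2.
Proof.
 assert (HT: infinite_sum (fun n => / INR (S n) - / INR (S (S n))) (/ INR (S 0))).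
 { apply (is_telesc (fun n => / INR (S n))).
   apply (Un_cv_ext (fun n => / (INR n + 1))). intros n; rewrite S_INR; auto. apply cv_inv; lra. }
 pose proof (is_scal _ _ 2 HT) as H2. simpl INR in H2. rewrite Rinv_1, Rmult_1_r in H2. exact H2. Qed.

Lemma INRS_ge1 k : 1 <= INR (S k).
Proof. rewrite S_INR; pose proof (pos_INR k); lra. Qed.

Lemma inv_sq_le x : 1 <= x -> / x ^ 2 <= 2 * (/ x - / (x + 1)).
Proof. intros Hx. assert (E: 2 * (/ x - / (x + 1)) - / x ^ 2 = (x - 1) * / (x ^ 2 * (x + 1))) by (field; lra).
 assert (0 <= (x - 1) * / (x ^ 2 * (x + 1))). { apply Rmult_le_pos. lra. left; apply Rinv_0_lt_compat; nra. }
 lra. Qed.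

Lemma pow_ex p a : (2 <= p)%nat -> 0 <= a -> exists l, infinite_sum (fun k => / (INR (S k) + a) ^ p) l.
Proof. intros Hp Ha.
 destruct (Rseries_CV_comp (fun k => / (INR (S k) + a) ^ p) (fun k => 2 * (/ INR (S k) - / INR (S (S k))))) as [l Hl].
 - intros k. pose proof (INRS_ge1 k). split. left; apply Rinv_0_lt_compat, pow_lt; lra.
   apply Rle_trans with (/ (INR (S k)) ^ 2).
   + apply Rinv_le_contravar. apply pow_lt; lra.
     apply Rle_trans with ((INR (S k) + a) ^ 2). apply pow_incr; lra. apply Rle_pow; [lra|exact Hp].
   + rewrite (S_INR (S k)). apply inv_sq_le; lra.
 - exists 2. exact tele2.
 - exists l; exact Hl. Qed.

Lemma zeta_ex p : (2 <= p)%nat -> exists l, infinite_sum (fun k => / INR (S k) ^ p) l.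
Proof. intros Hp. destruct (pow_ex p 0 Hp (Rle_refl 0)) as [l Hl]. exists l.
 apply (is_ext _ _ _ (fun k => f_equal (fun t => / t ^ p) (Rplus_0_r _))) in Hl. exact Hl. Qed.

Lemma Hm_ex p a : (1 <= p)%nat -> 0 <= a ->
  exists l, infinite_sum (fun k => / INR (S k) ^ p - / (INR (S k) + a) ^ p) l.
Proof. intros Hp Ha. destruct (Nat.eq_dec p 1) as [->|Hp2].
 - destruct (Rseries_CV_comp (fun k => / INR (S k) ^ 1 - / (INR (S k) + a) ^ 1) (fun k => a * (2 * (/ INR (S k) - / INR (S (S k)))))) as [l Hl].
   + intros k. pose proof (INRS_ge1 k). set (x := INR (S k)) in *. rewrite !pow_1.
     assert (E: / x - / (x + a) = a * / (x * (x + a))) by (field; lra).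
     rewrite E. split. apply Rmult_le_pos; auto. left; apply Rinv_0_lt_compat; nra.
     apply Rmult_le_compat_l; auto. apply Rle_trans with (/ x ^ 2).
     apply Rinv_le_contravar. nra. nra. rewrite (S_INR (S k)). apply inv_sq_le; auto.
   + exists (a * 2). apply is_scal, tele2.
   + exists l; exact Hl.
 - destruct (zeta_ex p) as [l1 H1]. lia. destruct (pow_ex p a) as [l2 H2]; auto. lia.
   exists (l1 - l2). apply is_minus; auto. Qed.

Lemma H_Hm1 a : 0 <= a -> H a = Hm 1 a.
Proof. intros Ha. unfold H. destruct (Hm_ex 1 a) as [l Hl]; auto.
 pose proof (series_spec _ (ex_intro _ l Hl)) as S1. fold (Hm 1 a) in S1.
 apply series_eq. revert S1. apply is_ext. intros k; rewrite !pow_1; auto. Qed.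

Lemma Hm_rec p a : (1 <= p)%nat -> 0 <= a -> Hm p (a + 1) = Hm p a + / (a + 1) ^ p.
Proof. intros Hp Ha.
 pose proof (series_spec _ (Hm_ex p (a+1) Hp ltac:(lra))) as HA.
 pose proof (series_spec _ (Hm_ex p a Hp Ha)) as HB.
 fold (Hm p (a+1)) in HA. fold (Hm p a) in HB.
 pose proof (is_minus _ _ _ _ HA HB) as HD.
 destruct p as [|p']. lia.
 pose proof (is_telesc (fun k => / (INR k + (1 + a)) ^ S p') (cv_inv_pow (1+a) p' ltac:(lra))) as HT.
 assert (HT' : infinite_sum (fun k => (/ INR (S k) ^ S p' - / (INR (S k) + (a + 1)) ^ S p') -
     (/ INR (S k) ^ S p' - / (INR (S k) + a) ^ S p')) (/ (a + 1) ^ S p')).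
 { replace (/ (a + 1) ^ S p') with (/ (INR 0 + (1 + a)) ^ S p') by (simpl INR; f_equal; f_equal; ring).
   revert HT. apply is_ext. intros k. rewrite !S_INR.
   replace (INR k + 1 + (a + 1)) with (INR k + 1 + (1 + a)) by ring.
   replace (INR k + 1 + a) with (INR k + (1 + a)) by ring. ring. }
 pose proof (uniqueness_sum _ _ _ HD HT'). lra. Qed.

Lemma H_rec a : 0 <= a -> H (a + 1) = H a + / (a + 1).
Proof. intros Ha. rewrite !H_Hm1 by lra. rewrite Hm_rec by (auto; lia). rewrite pow_1; auto. Qed.
Lemma H_is a : 0 <= a -> infinite_sum (fun k => / INR (S k) - / (INR (S k) + a)) (H a).
Proof. intros Ha. rewrite H_Hm1 by auto. pose proof (series_spec _ (Hm_ex 1 a (le_n 1) Ha)) as S1.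
 revert S1; apply is_ext; intros k; rewrite !pow_1; auto. Qed.

Lemma Hm_is p a : (1 <= p)%nat -> 0 <= a -> infinite_sum (fun k => / INR (S k) ^ p - / (INR (S k) + a) ^ p) (Hm p a).
Proof. intros Hp Ha. exact (series_spec _ (Hm_ex p a Hp Ha)). Qed.

Lemma zeta_is p : (2 <= p)%nat -> infinite_sum (fun k => / INR (S k) ^ p) (zeta p).
Proof. intros Hp. exact (series_spec _ (zeta_ex p Hp)). Qed.

Lemma Hm2_bound b : 0 <= b -> 0 <= Hm 2 b <= zeta 2.
Proof. intros Hb. pose proof (Hm_is 2 b ltac:(lia) Hb) as HH. pose proof (zeta_is 2 (le_n 2)) as HZ.
 assert (T: forall k, 0 <= / INR (S k) ^ 2 - / (INR (S k) + b) ^ 2 <= / INR (S k) ^ 2).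
 { intros k. pose proof (INRS_ge1 k). assert (0 < / (INR (S k) + b) ^ 2) by (apply Rinv_0_lt_compat, pow_lt; lra).
   assert (/ (INR (S k) + b) ^ 2 <= / INR (S k) ^ 2). { apply Rinv_le_contravar. apply pow_lt; lra. apply pow_incr; lra. }
   lra. }
 split.
 - apply (Rle_cv_lim (Un:=sum_f_R0 (fun _ => 0)) (Vn:=sum_f_R0 (fun k => / INR (S k) ^ 2 - / (INR (S k) + b) ^ 2))).
   intros n; apply sum_Rle; intros; apply T. exact is_zero. exact HH.
 - apply (Rle_cv_lim (Un:=sum_f_R0 (fun k => / INR (S k) ^ 2 - / (INR (S k) + b) ^ 2)) (Vn:=sum_f_R0 (fun k => / INR (S k) ^ 2))).
   intros n; apply sum_Rle; intros; apply T. exact HH. exact HZ. Qed.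

Definition V (x : R) : R := / x ^ 2 * H x - / x * (zeta 2 - Hm 2 x) + Hm 2 x.

Lemma lemA x : 0 < x ->
  infinite_sum (fun n => Hm 2 (INR (S n) + x) / (INR (S n) * (INR (S n) + 1))) (V x).
Proof. intros Hx.
 assert (HP: infinite_sum (fun n => / (INR (S n) * (INR (S n) + x) ^ 2)) (/ x ^ 2 * H x - / x * (zeta 2 - Hm 2 x))).
 { pose proof (is_minus _ _ _ _ (is_scal _ _ (/ x ^ 2) (H_is x ltac:(lra)))
     (is_scal _ _ (/ x) (is_minus _ _ _ _ (zeta_is 2 (le_n 2)) (Hm_is 2 x ltac:(lia) ltac:(lra))))) as HC.
   revert HC; apply is_ext; intros n. pose proof (INRS_ge1 n). field. lra. }
 assert (PS: forall N, sum_f_R0 (fun n => Hm 2 (INR (S n) + x) / (INR (S n) * (INR (S n) + 1))) N =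
   Hm 2 x + sum_f_R0 (fun n => / (INR (S n) * (INR (S n) + x) ^ 2)) N - Hm 2 (INR (S N) + x) / (INR (S N) + 1)).
 { induction N.
   - simpl sum_f_R0. simpl INR. replace (1 + x) with (x + 1) by ring. rewrite Hm_rec by (auto; lra). field. lra.
   - rewrite tech5. rewrite IHN. rewrite tech5. pose proof (INRS_ge1 N). rewrite (S_INR (S N)). set (n := INR (S N)) in *.
     replace (n + 1 + x) with ((n + x) + 1) by ring. rewrite Hm_rec by (auto; lra). field. lra. }
 change (Un_cv (sum_f_R0 (fun n => Hm 2 (INR (S n) + x) / (INR (S n) * (INR (S n) + 1)))) (V x)).
 apply (Un_cv_ext (fun N => (fun _ => Hm 2 x) N + sum_f_R0 (fun n => / (INR (S n) * (INR (S n) + x) ^ 2)) N -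
     Hm 2 (INR (S N) + x) / (INR (S N) + 1))).
 { intros N; rewrite PS; auto. }
 replace (V x) with (Hm 2 x + (/ x ^ 2 * H x - / x * (zeta 2 - Hm 2 x)) - 0) by (unfold V; ring).
 apply CV_minus. apply CV_plus. apply cv_const. exact HP.
 apply (cv_bound _ (fun n => / (INR n + 2)) (zeta 2)).
 - pose proof (Hm2_bound 0 (Rle_refl 0)); lra.
 - intros n. pose proof (pos_INR n) as H0. pose proof (Hm2_bound (INR (S n) + x) ltac:(pose proof (INRS_ge1 n); lra)) as H1.
   rewrite S_INR. replace (INR n + 1 + 1) with (INR n + 2) by ring.
   unfold Rdiv. rewrite Rabs_mult. rewrite (Rabs_right (/ (INR n + 2))) by (left; apply Rinv_0_lt_compat; lra).
   apply Rmult_le_compat_r. left; apply Rinv_0_lt_compat; lra. rewrite S_INR in H1. rewrite Rabs_right; lra.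
 - apply cv_inv; lra. Qed.
Lemma sum1_ext m f g : (forall j, (1 <= j <= m)%nat -> f j = g j) -> sum1 m f = sum1 m g.
Proof. induction m; intros E; simpl; auto. rewrite IHm. rewrite E; auto; lia. intros j Hj; apply E; lia. Qed.

Lemma sum1_shift m f : sum1 (S m) f = f 1%nat + sum1 m (fun j => f (S j)).
Proof. induction m. simpl; ring. change (sum1 (S (S m)) f) with (sum1 (S m) f + f (S (S m))).
 rewrite IHm. simpl. ring. Qed.

Lemma sum1_lin m f g a b : sum1 m (fun j => a * f j + b * g j) = a * sum1 m f + b * sum1 m g.
Proof. induction m; simpl. ring. rewrite IHm. ring. Qed.

Lemma tail g L m : infinite_sum g L -> infinite_sum (fun n => g (n + m)%nat) (L - sum1 m (fun j => g (pred j))).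
Proof. intros HL. induction m.
 - simpl. replace (L - 0) with L by ring. revert HL; apply is_ext; intros n; rewrite Nat.add_0_r; auto.
 - pose proof (is_shift _ _ IHm) as HS. simpl (0 + m)%nat in HS.
   replace (L - sum1 (S m) (fun j => g (pred j))) with (L - sum1 m (fun j => g (pred j)) - g m) by (simpl; ring).
   revert HS; apply is_ext; intros n. f_equal; lia. Qed.

Lemma lemU m a : INR m < a ->
  infinite_sum (fun n => Hm 2 (INR (S n) + a) / ((INR (S n) + INR m) * (INR (S n) + INR m + 1)))
    (V (a - INR m) - sum1 m (fun j => Hm 2 (a + INR j - INR m) / (INR j * (INR j + 1)))).
Proof. intros Hm0. pose proof (tail _ _ m (lemA (a - INR m) ltac:(lra))) as HT.
 replace (sum1 m (fun j => Hm 2 (a + INR j - INR m) / (INR j * (INR j + 1)))) with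
   (sum1 m (fun j => Hm 2 (INR (S (pred j)) + (a - INR m)) / (INR (S (pred j)) * (INR (S (pred j)) + 1)))).
 - revert HT; apply is_ext; intros n. rewrite <- plus_Sn_m, plus_INR.
   apply (f_equal2 Rdiv). f_equal; ring. ring.
 - apply sum1_ext; intros j Hj. rewrite Nat.succ_pred_pos by lia. apply (f_equal2 Rdiv). f_equal; ring. ring. Qed.

Definition S2 (al : R) (m : nat) := sum1 m (fun j => Hm 2 (al + INR j - INR m) / (INR j * (al + INR j - INR m))).
Definition Qs (al : R) (m : nat) := sum1 m (fun j => H (al + INR j - INR m) / (al + INR j - INR m) ^ 2).
Definition F (al : R) (m : nat) :=
  - (INR m - al) * S2 al m - Qs al m - 2 * Hm 3 (al - INR m) + H (al - INR m) * zeta 2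
  - 2 * H (al - INR m) * Hm 2 (al - INR m).

Lemma shift2 (phi : R -> R -> R) al n k :
  sum1 (S n) (fun j => phi (al + INR j - INR (S k)) (INR j)) =
  phi (al - INR k) 1 + sum1 n (fun j => phi (al + INR j - INR k) (INR j + 1)).
Proof. rewrite sum1_shift. f_equal. change (INR 1) with 1. rewrite S_INR. f_equal; ring.
 apply sum1_ext; intros j _. rewrite !S_INR. f_equal; ring. Qed.

Lemma dF m al : INR (S m) < al ->
  F al (S m) - F al m = V (al - INR m) - sum1 m (fun j => Hm 2 (al + INR j - INR m) / (INR j * (INR j + 1))).
Proof. intros Hal. rewrite S_INR in Hal.
 assert (Hx' : 0 <= al - INR (S m)) by (rewrite S_INR; lra).
 assert (E1 : al - INR (S m) + 1 = al - INR m) by (rewrite S_INR; ring).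
 pose proof (H_rec _ Hx') as R1. pose proof (Hm_rec 2 _ ltac:(lia) Hx') as R2. pose proof (Hm_rec 3 _ ltac:(lia) Hx') as R3.
 rewrite E1 in R1, R2, R3.
 pose proof (shift2 (fun t u => Hm 2 t / (u * t)) al m m) as SS. cbv beta in SS.
 pose proof (shift2 (fun t u => H t / t ^ 2) al m m) as SQ. cbv beta in SQ.
 set (x := al - INR m) in *.
 assert (key : sum1 m (fun j => Hm 2 (al + INR j - INR m) / (INR j * (INR j + 1))) =
   - ((x - 1) * sum1 m (fun j => Hm 2 (al + INR j - INR m) / ((INR j + 1) * (al + INR j - INR m)))
      + (- x) * sum1 m (fun j => Hm 2 (al + INR j - INR m) / (INR j * (al + INR j - INR m))))).
 { assert (E : sum1 m (fun j => (x - 1) * (Hm 2 (al + INR j - INR m) / ((INR j + 1) * (al + INR j - INR m)))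
      + (- x) * (Hm 2 (al + INR j - INR m) / (INR j * (al + INR j - INR m)))) =
     sum1 m (fun j => (-1) * (Hm 2 (al + INR j - INR m) / (INR j * (INR j + 1))) + 0 * (Hm 2 (al + INR j - INR m) / (INR j * (INR j + 1))))).
   { apply sum1_ext. intros j Hj.
     assert (Hj1 : 1 <= INR j) by (apply (le_INR 1); lia).
     unfold x. field. lra. }
   rewrite !sum1_lin in E. rewrite E. ring. }
 unfold F, S2, Qs. rewrite SS, SQ. fold x. rewrite key. unfold V. rewrite S_INR. fold x.
 assert (Hx : x <> 0) by (unfold x; lra).
 rewrite S_INR in R1, R2, R3.
 replace (H (al - (INR m + 1))) with (H x - / x) by lra.
 replace (Hm 2 (al - (INR m + 1))) with (Hm 2 x - / x ^ 2) by lra.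
 replace (Hm 3 (al - (INR m + 1))) with (Hm 3 x - / x ^ 3) by lra.
 replace (INR m + 1 - al) with (1 - x) by (unfold x; ring).
 replace (INR m - al) with (- x) by (unfold x; ring).
 field. auto. Qed.
Lemma lemW r al d : forall k, k = (r + d)%nat -> INR k < al ->
  infinite_sum (fun n => Hm 2 (INR (S n) + al) * (/ (INR (S n) + INR r) - / (INR (S n) + INR k))) (F al k - F al r).
Proof. induction d; intros k Hk Hal.
 - rewrite Nat.add_0_r in Hk; subst k. rewrite Rminus_diag. generalize is_zero; apply is_ext; intros n; ring.
 - rewrite Nat.add_succ_r in Hk. subst k. set (k0 := (r + d)%nat) in *.
   assert (Hk0 : INR k0 < al) by (rewrite S_INR in Hal; lra).
   pose proof (is_plus _ _ _ _ (IHd k0 eq_refl Hk0) (lemU k0 al Hk0)) as HP.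
   rewrite <- (dF k0 al Hal) in HP.
   replace (F al (S k0) - F al r) with (F al k0 - F al r + (F al (S k0) - F al k0)) by ring.
   revert HP; apply is_ext; intros n. rewrite (S_INR k0).
   pose proof (pos_INR k0). pose proof (pos_INR r). pose proof (INRS_ge1 n). field. lra. Qed.

Lemma Qdiff al r d : forall k, k = (r + d)%nat ->
  Qs al k - Qs al r = sum1 (k - r) (fun j => H (al + INR j - INR k) / (al + INR j - INR k) ^ 2).
Proof. induction d; intros k Hk.
 - rewrite Nat.add_0_r in Hk; subst k. rewrite Nat.sub_diag. simpl. ring.
 - rewrite Nat.add_succ_r in Hk. subst k. set (k0 := (r + d)%nat) in *.
   replace (S k0 - r)%nat with (S (k0 - r)) by (unfold k0; lia).
   pose proof (shift2 (fun t u => H t / t ^ 2) al (k0 - r) k0) as S1. cbv beta in S1. rewrite S1.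
   pose proof (shift2 (fun t u => H t / t ^ 2) al k0 k0) as S2'. cbv beta in S2'. unfold Qs at 1. rewrite S2'.
   rewrite <- (IHd k0 eq_refl). unfold Qs. ring. Qed.
Theorem theorem2p4 (r k : nat) (alpha : R)
  (hrk : (r < k)%nat) (hka : INR k < alpha) :
  infinite_sum
    (fun n => Hm 2 (INR (S n) + alpha) / ((INR (S n) + INR r) * (INR (S n) + INR k)))
    (/ (INR k - INR r) *
      ( (INR r - alpha) *
          sum1 r (fun j => Hm 2 (alpha + INR j - INR r) / (INR j * (alpha + INR j - INR r)))
      - (INR k - alpha) *
          sum1 k (fun j => Hm 2 (alpha + INR j - INR k) / (INR j * (alpha + INR j - INR k)))
      - sum1 (k - r) (fun j => H (alpha + INR j - INR k) / (alpha + INR j - INR k) ^ 2)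
      + 2 * Hm 3 (alpha - INR r)
      + H (alpha - INR k) * zeta 2
      + 2 * H (alpha - INR r) * Hm 2 (alpha - INR r)
      - 2 * Hm 3 (alpha - INR k)
      - H (alpha - INR r) * zeta 2
      - 2 * H (alpha - INR k) * Hm 2 (alpha - INR k) )).
Proof.
 assert (Hd : k = (r + (k - r))%nat) by lia.
 pose proof (lemW r alpha (k - r) k Hd hka) as HW.
 rewrite <- (Qdiff alpha r (k - r) k Hd).
 assert (Hrk : INR r < INR k) by (apply lt_INR; auto).
 replace (/ (INR k - INR r) * _) with (/ (INR k - INR r) * (F alpha k - F alpha r)) by (unfold F, S2; ring).
 pose proof (is_scal _ _ (/ (INR k - INR r)) HW) as HS.
 revert HS; apply is_ext; intros n. pose proof (pos_INR r). pose proof (INRS_ge1 n). field. lra. Qed.
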